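(* Consider the sub-$\ell^\infty$ structure on $\mathbb{R}^3$ defined by $X_1=\partial_x-\tfrac{y}{2}\partial_z$, $X_2=\partial_y+\tfrac{x}{2}\partial_z$. (a) Let $(\lambda,\gamma)$ be an extremal pair on $[0,T]$ with $\gamma$ nonconstant and control $u$, and suppose that for some $j\in\{1,2\}$ the restriction to some open interval $I$ is a $\varphi_j$-singular arc. Then $\varphi_j\equiv0$ on all of $[0,T]$ and $u_{3-j}$ is a.e. constantly equal to $1$ or constantly equal to $-1$ on $[0,T]$. (b) Conversely, every admissible trajectory for which, for some $i\in\{1,2\}$, $u_i$ is a.e. constantly equal to $1$ or a.e. constantly equal to $-1$, admits an extremal lift for which $\varphi_{3-i}\equiv0$ on the whole domain. (c) Every such admissible trajectory (with $u_i\equiv1$ or $u_i\equiv-1$ for some $i$) is a time-minimizer.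
   Context: Sub-$\ell^\infty$ structure defined by smooth vector fields $X_1,\dots,X_k$ on a manifold $M$: an admissible trajectory is an absolutely continuous curve $\gamma:[0,T]\to M$ together with a measurable control $u=(u_1,\dots,u_k):[0,T]\to\mathbb{R}^k$ with $|u_i(t)|\le1$ for all $i$ and a.e. $t$, such that $\dot\gamma(t)=\sum_i u_i(t)X_i(\gamma(t))$ for a.e. $t$. It is a time-minimizer (optimal) if no admissible trajectory joins $\gamma(0)$ to $\gamma(T)$ in time less than $T$. An extremal pair is a pair $(\lambda,\gamma)$ where $\gamma$ is admissible with control $u$ and $\lambda:[0,T]\to T^*M$ is absolutely continuous with $\lambda(t)\in T^*_{\gamma(t)}M\setminus\{0\}$, such that, with $\mathcal H(\lambda,p,u)=\sum_i u_i\langle\lambda,X_i(p)\rangle$, in canonical coordinates $\dot\lambda=-\partial_p\mathcal H(\lambda,\gamma,u)$, $\dot\gamma=\partial_\lambda\mathcal H(\lambda,\gamma,u)$ a.e., and there is a constant $\lambda_0\ge0$ with $\sum_iu_i(t)\langle\lambda(t),X_i(\gamma(t))\rangle=\sum_i|\langle\lambda(t),X_i(\gamma(t))\rangle|=\lambda_0$ for a.e. $t$; $\gamma$ is then an extremal trajectory and $\lambda$ an extremal lift. The switching functions are $\varphi_j(t)=\langle\lambda(t),X_j(\gamma(t))\rangle$. The restriction of an extremal pair to an open interval $I$ is a $\varphi_j$-singular arc if $\varphi_j\equiv0$ on $I$. *)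

(* Defs.v *)
From Stdlib Require Import Reals List.
Import ListNotations.
Open Scope R_scope.

Record V3 := mkV3 { vx : R; vy : R; vz : R }.

Definition vzero : V3 := mkV3 0 0 0.
Definition vadd (v w : V3) : V3 := mkV3 (vx v + vx w) (vy v + vy w) (vz v + vz w).
Definition vscal (a : R) (v : V3) : V3 := mkV3 (a * vx v) (a * vy v) (a * vz v).
(* pairing <lambda, v> of a covector with a vector in canonical coordinates *)
Definition dot (l v : V3) : R := vx l * vx v + vy l * vy v + vz l * vz v.
Definition comp (k : nat) (v : V3) : R :=
  match k with 0%nat => vx v | 1%nat => vy v | _ => vz v end.
Definition ek (k : nat) : V3 :=
  match k with 0%nat => mkV3 1 0 0 | 1%nat => mkV3 0 1 0 | _ => mkV3 0 0 1 end.

Definition X (i : nat) (p : V3) : V3 :=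
  match i with
  | 1%nat => mkV3 1 0 (- vy p / 2)
  | 2%nat => mkV3 0 1 (vx p / 2)
  | _ => vzero
  end.

Definition field_of (w : nat -> R) (p : V3) : V3 :=
  vadd (vscal (w 1%nat) (X 1 p)) (vscal (w 2%nat) (X 2 p)).

Definition Hfun (l p : V3) (w : nat -> R) : R :=
  w 1%nat * dot l (X 1 p) + w 2%nat * dot l (X 2 p).

Definition covers (S : R -> Prop) (a b : nat -> R) : Prop :=
  (forall n, a n <= b n) /\ (forall t, S t -> exists n, a n < t < b n).

Definition outer_le (S : R -> Prop) (r : R) : Prop :=
  exists a b : nat -> R, covers S a b /\
    forall N, sum_f_R0 (fun n => b n - a n) N <= r.

Definition null (S : R -> Prop) : Prop :=
  forall eps, eps > 0 -> outer_le S eps.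

Definition ae_on (T : R) (P : R -> Prop) : Prop :=
  null (fun t => 0 <= t <= T /\ ~ P t).

(* Caratheodory criterion: m*(A) >= m*(A /\ E) + m*(A \ E) for all A *)
Definition meas_set (E : R -> Prop) : Prop :=
  forall (A : R -> Prop) r, outer_le A r ->
    forall eps, eps > 0 ->
      exists r1 r2, outer_le (fun t => A t /\ E t) r1 /\
                    outer_le (fun t => A t /\ ~ E t) r2 /\ r1 + r2 <= r + eps.

Definition meas_fun_on (T : R) (f : R -> R) : Prop :=
  forall c, meas_set (fun t => 0 <= t <= T /\ f t > c).

Fixpoint disj_in (lo hi : R) (l : list (R * R)) : Prop :=
  match l with
  | [] => True
  | (a, b) :: l' => lo <= a /\ a <= b /\ b <= hi /\ disj_in b hi l'
  end.

Definition sum_len (l : list (R * R)) : R :=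
  fold_right (fun ab s => snd ab - fst ab + s) 0 l.

Definition sum_var (f : R -> R) (l : list (R * R)) : R :=
  fold_right (fun ab s => Rabs (f (snd ab) - f (fst ab)) + s) 0 l.

Definition abs_cont_on (T : R) (f : R -> R) : Prop :=
  forall eps, eps > 0 -> exists delta, delta > 0 /\
    forall l, disj_in 0 T l -> sum_len l < delta -> sum_var f l < eps.

Definition abs_cont_curve (T : R) (g : R -> V3) : Prop :=
  forall k, (k <= 2)%nat -> abs_cont_on T (fun t => comp k (g t)).

Definition admissible (T : R) (g : R -> V3) (u : nat -> R -> R) : Prop :=
  0 <= T /\
  abs_cont_curve T g /\
  (forall i, (i = 1 \/ i = 2)%nat ->
      meas_fun_on T (u i) /\ ae_on T (fun t => Rabs (u i t) <= 1)) /\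
  ae_on T (fun t => forall k, (k <= 2)%nat ->
      derivable_pt_lim (fun s => comp k (g s)) t
                       (comp k (field_of (fun i => u i t) (g t)))).

Definition phi (j : nat) (l g : R -> V3) (t : R) : R := dot (l t) (X j (g t)).

Definition extremal_pair (T : R) (l g : R -> V3) (u : nat -> R -> R) : Prop :=
  admissible T g u /\
  abs_cont_curve T l /\
  (forall t, 0 <= t <= T -> l t <> vzero) /\
  ae_on T (fun t => forall k, (k <= 2)%nat ->
     (* lambda_k' = - dH/dp_k *)
     (exists d, derivable_pt_lim
                  (fun s => Hfun (l t) (vadd (g t) (vscal s (ek k))) (fun i => u i t)) 0 d
              /\ derivable_pt_lim (fun s => comp k (l s)) t (- d)) /\
     (* gamma_k' = dH/dlambda_k *)
     (exists d, derivable_pt_lim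
                  (fun s => Hfun (vadd (l t) (vscal s (ek k))) (g t) (fun i => u i t)) 0 d
              /\ derivable_pt_lim (fun s => comp k (g s)) t d)) /\
  exists l0, 0 <= l0 /\
    ae_on T (fun t =>
      u 1%nat t * phi 1 l g t + u 2%nat t * phi 2 l g t = l0 /\
      Rabs (phi 1 l g t) + Rabs (phi 2 l g t) = l0).

Definition time_minimizer (T : R) (g : R -> V3) : Prop :=
  forall T' g' u', admissible T' g' u' -> g' 0 = g 0 -> g' T' = g T -> T <= T'.

Definition const_pm1 (T : R) (v : R -> R) : Prop :=
  ae_on T (fun t => v t = 1) \/ ae_on T (fun t => v t = -1).

(* Main.v *)
Require Import Defs.
From Stdlib Require Import Reals.
From Stdlib Require Import Lra Lia List Classical FunctionalExtensionality.
Import ListNotations.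
Open Scope R_scope.

Lemma null_mono (A B : R -> Prop) : null A -> (forall t, B t -> A t) -> null B.
Proof.
  intros HA HB eps Heps. destruct (HA eps Heps) as [a [b [[Hab Hc] Hs]]].
  exists a, b. split; [split|]; auto.
Qed.

Lemma sum_zero N : sum_f_R0 (fun _ : nat => 0 - 0) N = 0.
Proof. induction N; simpl; lra. Qed.

Definition ilv (f g : nat -> R) (n : nat) : R :=
  if Nat.even n then f (Nat.div2 n) else g (Nat.div2 n).

Lemma ilv_e f g n : ilv f g (2*n) = f n.
Proof. unfold ilv. rewrite Nat.even_even, Nat.div2_double. reflexivity. Qed.
Lemma ilv_o f g n : ilv f g (S (2*n)) = g n.
Proof. unfold ilv. replace (S (2*n)) with (2*n+1)%nat by lia.
  rewrite Nat.even_odd. replace (2*n+1)%nat with (S (2*n)) by lia.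
  rewrite Nat.div2_succ_double. reflexivity. Qed.

Lemma sum_ilv f g N : sum_f_R0 (ilv f g) (S (2*N)) = sum_f_R0 f N + sum_f_R0 g N.
Proof.
  induction N.
  - simpl. unfold ilv. simpl. ring.
  - replace (S (2 * S N)) with (S (S (S (2*N)))) by lia.
    rewrite tech5, tech5, IHN, tech5, tech5.
    replace (S (S (2*N))) with (2 * S N)%nat by lia. rewrite ilv_e, ilv_o. ring.
Qed.

Lemma sum_mono (h : nat -> R) N M : (forall n, 0 <= h n) -> (N <= M)%nat ->
  sum_f_R0 h N <= sum_f_R0 h M.
Proof.
  intros Hh HNM. induction HNM; [lra|]. rewrite tech5. specialize (Hh (S m)). lra.
Qed.

Lemma null_union (A B : R -> Prop) : null A -> null B -> null (fun t => A t \/ B t).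
Proof.
  intros HA HB eps Heps.
  destruct (HA (eps/2) ltac:(lra)) as [a [b [[Hab Hc] Hs]]].
  destruct (HB (eps/2) ltac:(lra)) as [a' [b' [[Hab' Hc'] Hs']]].
  exists (ilv a a'), (ilv b b'). split; [split|].
  - intros n. unfold ilv. destruct (Nat.even n); auto.
  - intros t [Ht|Ht].
    + destruct (Hc t Ht) as [n Hn]. exists (2*n)%nat. rewrite !ilv_e. exact Hn.
    + destruct (Hc' t Ht) as [n Hn]. exists (S (2*n))%nat. rewrite !ilv_o. exact Hn.
  - intros N.
    assert (E : forall M, sum_f_R0 (fun n => ilv b b' n - ilv a a' n) M =
                      sum_f_R0 (ilv (fun n => b n - a n) (fun n => b' n - a' n)) M).
    { intros M. apply sum_eq. intros i _. unfold ilv. destruct (Nat.even i); reflexivity. }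
    rewrite E. eapply Rle_trans.
    + apply (sum_mono _ N (S (2*N))). 2: lia.
      intros n. unfold ilv. destruct (Nat.even n); [specialize (Hab (Nat.div2 n))|specialize (Hab' (Nat.div2 n))]; lra.
    + rewrite sum_ilv. specialize (Hs N). specialize (Hs' N). lra.
Qed.

Lemma null_pt (c : R) : null (fun t => t = c).
Proof.
  intros eps Heps.
  exists (fun n => match n with O => c - eps/4 | _ => 0 end),
         (fun n => match n with O => c + eps/4 | _ => 0 end).
  split; [split|].
  - intros [|n]; lra.
  - intros t ->. exists O. lra.
  - intros N. induction N; simpl; lra.
Qed.

Lemma ae_mono T (P Q : R -> Prop) : ae_on T P ->
  (forall t, 0 <= t <= T -> P t -> Q t) -> ae_on T Q.
Proof.
  intros H HPQ. apply (null_mono _ _ H). intros t [Ht HnQ]. split; auto.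
Qed.

Lemma ae_and T (P Q : R -> Prop) : ae_on T P -> ae_on T Q -> ae_on T (fun t => P t /\ Q t).
Proof.
  intros HP HQ. apply (null_mono _ _ (null_union _ _ HP HQ)). intros t [Ht HPQ].
  destruct (classic (P t)) as [H|H]; [right; split; auto | left; auto].
Qed.

Lemma ae_all T (P : R -> Prop) : (forall t, P t) -> ae_on T P.
Proof.
  intros H. apply (null_mono _ _ (null_pt 0)). intros t [_ Hn]. exfalso; auto.
Qed.

Lemma ae_pt T (P : R -> Prop) c : (forall t, t <> c -> P t) -> ae_on T P.
Proof.
  intros H. apply (null_mono _ _ (null_pt c)). intros t [_ Hn].
  destruct (Req_dec t c); auto. exfalso; auto.
Qed.


Lemma disj_lo lo lo' hi l : disj_in lo hi l -> lo' <= lo -> disj_in lo' hi l.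
Proof. destruct l as [|[a b] l]; simpl; auto. intros [H1 [H2 [H3 H4]]] H. repeat split; auto; lra. Qed.

Lemma disj_hi lo hi hi' l : disj_in lo hi l -> hi <= hi' -> disj_in lo hi' l.
Proof. revert lo. induction l as [|[a b] l IH]; simpl; intros lo H Hh; auto.
  destruct H as [H1 [H2 [H3 H4]]]. repeat split; try lra. apply IH; auto. Qed.

Lemma disj_app lo mid hi l1 l2 : disj_in lo mid l1 -> disj_in mid hi l2 -> lo <= mid -> mid <= hi ->
  disj_in lo hi (l1 ++ l2).
Proof. revert lo. induction l1 as [|[a b] l IH]; simpl; intros lo H1 H2 Hl Hm.
  - apply (disj_lo mid); auto.
  - destruct H1 as [A1 [A2 [A3 A4]]]. repeat split; try lra. apply IH; auto. Qed.

Lemma disj_first lo hi A (l : list ((R*R)*nat)) : disj_in lo hi (map fst l) ->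
  (forall x, In x l -> A <= fst (fst x)) -> disj_in A hi (map fst l).
Proof. destruct l as [|[[a b] n] l]; simpl; auto. intros [H1 [H2 [H3 H4]]] H.
  specialize (H ((a,b),n) (or_introl eq_refl)). simpl in H. repeat split; auto. Qed.

Lemma disj_filter lo hi (P : (R*R)*nat -> bool) (l : list ((R*R)*nat)) :
  disj_in lo hi (map fst l) -> disj_in lo hi (map fst (filter P l)).
Proof. revert lo. induction l as [|[[a b] n] l IH]; simpl; intros lo H; auto.
  destruct H as [H1 [H2 [H3 H4]]]. destruct (P ((a,b),n)); simpl.
  - repeat split; auto.
  - apply (disj_lo b); auto. lra. Qed.

Lemma sum_len_split (P : (R*R)*nat -> bool) (l : list ((R*R)*nat)) :
  sum_len (map fst l) = sum_len (map fst (filter P l)) + sum_len (map fst (filter (fun x => negb (P x)) l)).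
Proof. induction l as [|x l IH]; simpl; [ring|]. destruct (P x); simpl; rewrite IH; ring. Qed.

Lemma sum_len_bound lo hi B l : disj_in lo hi l -> (forall p, In p l -> snd p <= B) -> lo <= B ->
  sum_len l <= B - lo.
Proof. revert lo. induction l as [|[a b] l IH]; simpl; intros lo H HB Hlo. lra.
  destruct H as [H1 [H2 [H3 H4]]].
  assert (b <= B) by (apply (HB (a,b)); left; reflexivity).
  specialize (IH b H4 (fun p Hp => HB p (or_intror Hp)) H). lra. Qed.

Lemma sum_len_nil (l : list ((R*R)*nat)) : (forall x, ~ In x l) -> sum_len (map fst l) = 0.
Proof. destruct l as [|x l]; simpl; auto. intros H. exfalso. apply (H x). left; auto. Qed.

Lemma count_bound (a b : nat -> R) (Hab : forall n, a n <= b n) K : forall (l : list ((R*R)*nat)) lo hi,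
  disj_in lo hi (map fst l) ->
  (forall x, In x l -> (snd x <= K)%nat /\ a (snd x) <= fst (fst x) /\ snd (fst x) <= b (snd x)) ->
  sum_len (map fst l) <= sum_f_R0 (fun n => b n - a n) K.
Proof.
  assert (Part : forall K' (l : list ((R*R)*nat)) lo hi, disj_in lo hi (map fst l) ->
     (forall x, In x l -> snd x = K' /\ a (snd x) <= fst (fst x) /\ snd (fst x) <= b (snd x)) ->
     sum_len (map fst l) <= b K' - a K').
  { intros K' l lo hi H1 H2.
    apply (sum_len_bound (a K') hi).
    - apply (disj_first lo); auto. intros x Hx. destruct (H2 x Hx) as [E [E1 E2]]. rewrite <- E; auto.
    - intros p Hp. apply in_map_iff in Hp. destruct Hp as [x [<- Hx]].
      destruct (H2 x Hx) as [E [E1 E2]]. rewrite <- E; auto.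
    - apply Hab. }
  induction K as [|K IH]; intros l lo hi H1 H2.
  - simpl. apply (Part 0%nat l lo hi H1). intros x Hx. destruct (H2 x Hx) as [E1 E2]. split; auto. lia.
  - rewrite (sum_len_split (fun x => Nat.eqb (snd x) (S K))). rewrite tech5.
    assert (A1 := Part (S K) (filter (fun x => Nat.eqb (snd x) (S K)) l) lo hi).
    assert (A2 := IH (filter (fun x => negb (Nat.eqb (snd x) (S K))) l) lo hi).
    cut (sum_len (map fst (filter (fun x => Nat.eqb (snd x) (S K)) l)) <= b (S K) - a (S K)).
    cut (sum_len (map fst (filter (fun x => negb (Nat.eqb (snd x) (S K))) l)) <=
           sum_f_R0 (fun n => b n - a n) K). lra.
    + apply A2. apply disj_filter; auto. intros x Hx. apply filter_In in Hx. destruct Hx as [Hx Hn].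
      destruct (H2 x Hx) as [E1 E2]. split; auto. apply Bool.negb_true_iff in Hn.
      apply Nat.eqb_neq in Hn. lia.
    + apply A1. apply disj_filter; auto. intros x Hx. apply filter_In in Hx. destruct Hx as [Hx Hn].
      destruct (H2 x Hx) as [E1 E2]. split; auto. apply Nat.eqb_eq in Hn. auto.
Qed.

Lemma maxidx (l : list ((R*R)*nat)) : exists K, forall x, In x l -> (snd x <= K)%nat.
Proof. induction l as [|y l [K HK]]. exists O; intros x []. exists (Nat.max K (snd y)).
  intros x [<-|Hx]. lia. specialize (HK x Hx). lia. Qed.

Lemma sum_var_app f l1 l2 : sum_var f (l1 ++ l2) = sum_var f l1 + sum_var f l2.
Proof. induction l1 as [|x l IH]; simpl; [ring|]. unfold sum_var in *. simpl. rewrite IH. ring. Qed.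


Lemma ML_eta (T c : R) (f : R -> R) :
  0 <= c -> abs_cont_on T f ->
  ae_on T (fun t => exists d, derivable_pt_lim f t d /\ d <= c) ->
  forall s t, 0 <= s -> s <= t -> t <= T -> forall eta, eta > 0 ->
  f t - f s <= (c + eta) * (t - s) + eta.
Proof.
  intros Hc Hac Hae s t Hs Hst HtT eta Heta.
  destruct (Hac eta Heta) as [delta [Hdelta Hac']].
  destruct (Hae (delta/2) ltac:(lra)) as [a [b [[Hab Hcov] Hsum]]].
  set (Q := fun x => exists l : list ((R*R)*nat),
      disj_in s x (map fst l) /\
      (forall y, In y l -> a (snd y) <= fst (fst y) /\ snd (fst y) <= b (snd y)) /\
      f x - f s <= (c+eta)*(x-s) + sum_var f (map fst l)).
  assert (Qb: forall x, s <= x <= t -> Q x -> f x - f s <= (c+eta)*(x-s) + eta).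
  { intros x Hx [l [H1 [H2 H3]]].
    destruct (maxidx l) as [K HK].
    assert (sum_len (map fst l) <= delta/2).
    { eapply Rle_trans; [apply (count_bound a b Hab K l s x H1)|apply Hsum].
      intros z Hz. split; auto. }
    assert (sum_var f (map fst l) < eta).
    { apply Hac'; [|lra]. apply (disj_lo s); [|lra]. apply (disj_hi s x); auto; lra. }
    lra. }
  assert (Qs : Q s).
  { exists []. split; [exact I|]. split; [intros z []|]. unfold sum_var; simpl. lra. }
  set (S := fun x => s <= x <= t /\ Q x).
  destruct (completeness S) as [m [Hub Hlub]].
  { exists t. intros x [Hx _]; lra. }
  { exists s. split; [lra|]. exact Qs. }
  assert (Hsm : s <= m) by (apply Hub; split; [lra|exact Qs]).
  assert (Hmt : m <= t) by (apply Hlub; intros x [Hx _]; lra).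
  assert (Approx : forall e, e > 0 -> exists y, S y /\ m - e < y).
  { intros e He. apply NNPP. intro Hn.
    assert (m <= m - e); [|lra]. apply Hlub. intros x Sx.
    apply Rnot_lt_le. intro Hx. apply Hn. exists x; auto. }
  assert (Qm : Q m).
  { destruct (Req_dec m s) as [Ems|Nms]; [rewrite Ems; exact Qs|].
    destruct (classic (exists d, derivable_pt_lim f m d /\ d <= c)) as [[d [Hd Hdc]]|Hnd].
    - destruct (Hd eta Heta) as [d0 Hd0].
      destruct (Approx d0 (cond_pos d0)) as [y [[Hy [l [H1 [H2 H3]]]] Hy2]].
      assert (Hym : y <= m) by (apply Hub; split; auto; exists l; auto).
      destruct (Req_dec y m) as [Eym|Nym]; [rewrite <- Eym; exists l; auto|].
      specialize (Hd0 (y - m) ltac:(lra) ltac:(rewrite Rabs_left; lra)).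
      replace (m + (y - m)) with y in Hd0 by ring.
      set (q := (f y - f m) / (y - m)) in Hd0.
      assert (Eq : f y - f m = q * (y - m)) by (unfold q; field; lra).
      assert (q < d + eta) by (apply Rabs_def2 in Hd0; lra).
      exists l. split; [apply (disj_hi s y); auto; lra|]. split; auto.
      assert (q * (y - m) > (d + eta) * (y - m)) by nra.
      assert ((c + eta) * (m - y) >= (d + eta) * (m - y)) by nra.
      nra.
    - assert (Hin : 0 <= m <= T /\ ~ (exists d, derivable_pt_lim f m d /\ d <= c)) by (split; [lra|auto]).
      destruct (Hcov m Hin) as [n Hn].
      destruct (Approx (m - Rmax (a n) s)) as [y [[Hy [l [H1 [H2 H3]]]] Hy2]].
      { unfold Rmax; destruct (Rle_dec (a n) s); lra. }
      assert (Hym : y <= m) by (apply Hub; split; auto; exists l; auto).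
      assert (Hay : a n < y /\ s < y) by (unfold Rmax in Hy2; destruct (Rle_dec (a n) s); lra).
      exists (l ++ [((y, m), n)]). split; [|split].
      + rewrite map_app. apply (disj_app s y m); auto; try lra. simpl. lra.
      + intros z Hz. apply in_app_or in Hz. destruct Hz as [Hz|[<-|[]]]; auto. simpl. lra.
      + rewrite map_app, sum_var_app. unfold sum_var at 2. simpl.
        assert (f m - f y <= Rabs (f m - f y)) by apply Rle_abs.
        assert ((c + eta) * (y - s) <= (c + eta) * (m - s)) by (apply Rmult_le_compat_l; lra).
        lra. }
  assert (Emt : m = t).
  { destruct (Req_dec m t) as [E|Nmt]; auto. exfalso.
    assert (Hex : exists y, m < y <= t /\ Q y).
    { destruct Qm as [l [H1 [H2 H3]]].
      destruct (classic (exists d, derivable_pt_lim f m d /\ d <= c)) as [[d [Hd Hdc]]|Hnd].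
      - destruct (Hd eta Heta) as [d0 Hd0].
        set (y := m + Rmin (d0/2) (t - m)).
        assert (Hy : m < y <= t /\ y - m < d0).
        { unfold y, Rmin. destruct (Rle_dec (d0/2) (t-m)); pose proof (cond_pos d0); lra. }
        specialize (Hd0 (y - m) ltac:(lra) ltac:(rewrite Rabs_right; lra)).
        replace (m + (y - m)) with y in Hd0 by ring.
        set (q := (f y - f m) / (y - m)) in Hd0.
        assert (Eq : f y - f m = q * (y - m)) by (unfold q; field; lra).
        assert (q < d + eta) by (apply Rabs_def2 in Hd0; lra).
        exists y. split; [lra|]. exists l. split; [apply (disj_hi s m); auto; lra|]. split; auto.
        assert (q * (y - m) < (d + eta) * (y - m)) by nra.
        assert ((c + eta) * (y - m) >= (d + eta) * (y - m)) by nra.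
        nra.
      - assert (Hin : 0 <= m <= T /\ ~ (exists d, derivable_pt_lim f m d /\ d <= c)) by (split; [lra|auto]).
        destruct (Hcov m Hin) as [n Hn].
        set (y := Rmin (b n) t).
        assert (Hy : m < y <= t /\ y <= b n) by (unfold y, Rmin; destruct (Rle_dec (b n) t); lra).
        exists y. split; [lra|].
        exists (l ++ [((m, y), n)]). split; [|split].
        + rewrite map_app. apply (disj_app s m y); auto; try lra. simpl. lra.
        + intros z Hz. apply in_app_or in Hz. destruct Hz as [Hz|[<-|[]]]; auto. simpl. lra.
        + rewrite map_app, sum_var_app. unfold sum_var at 2. simpl.
          assert (f y - f m <= Rabs (f y - f m)) by apply Rle_abs.
          assert ((c + eta) * (m - s) <= (c + eta) * (y - s)) by (apply Rmult_le_compat_l; lra).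
          lra. }
    destruct Hex as [y [Hy Qy]].
    assert (y <= m) by (apply Hub; split; [lra|auto]). lra. }
  subst m. apply Qb; auto; lra.
Qed.

Lemma ML (T c : R) (f : R -> R) :
  0 <= c -> abs_cont_on T f ->
  ae_on T (fun t => exists d, derivable_pt_lim f t d /\ d <= c) ->
  forall s t, 0 <= s -> s <= t -> t <= T -> f t - f s <= c * (t - s).
Proof.
  intros Hc Hac Hae s t Hs Hst HtT.
  apply Rnot_lt_le. intro Hlt.
  set (D := f t - f s - c * (t - s)).
  set (eta := D / (2 * (t - s + 1))).
  assert (Heta : eta > 0) by (unfold eta; apply Rdiv_lt_0_compat; unfold D; lra).
  pose proof (ML_eta T c f Hc Hac Hae s t Hs Hst HtT eta Heta).
  assert (eta * (t - s + 1) = D / 2) by (unfold eta; field; lra).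
  unfold D in *. nra.
Qed.


Lemma sum_var_nonneg f l : 0 <= sum_var f l.
Proof. induction l as [|x l IH]; unfold sum_var in *; simpl; [lra|]. pose proof (Rabs_pos (f (snd x) - f (fst x))). lra. Qed.

Lemma sum_var_lin a b f g l : sum_var (fun t => a * f t + b * g t) l <= Rabs a * sum_var f l + Rabs b * sum_var g l.
Proof. induction l as [|x l IH]; unfold sum_var in *; simpl; [lra|].
  replace (a * f (snd x) + b * g (snd x) - (a * f (fst x) + b * g (fst x))) with
    (a * (f (snd x) - f (fst x)) + b * (g (snd x) - g (fst x))) by ring.
  eapply Rle_trans; [apply Rplus_le_compat_r; apply Rabs_triang|]. rewrite !Rabs_mult. lra. Qed.

Lemma ac_lin T a b f g : abs_cont_on T f -> abs_cont_on T g -> abs_cont_on T (fun t => a * f t + b * g t).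
Proof.
  intros Hf Hg eps Heps.
  set (e := eps / (Rabs a + Rabs b + 1)).
  assert (Ha := Rabs_pos a). assert (Hb := Rabs_pos b).
  assert (He : e > 0) by (unfold e; apply Rdiv_lt_0_compat; lra).
  assert (Ee : e * (Rabs a + Rabs b + 1) = eps) by (unfold e; field; lra).
  destruct (Hf e He) as [d1 [Hd1 H1]]. destruct (Hg e He) as [d2 [Hd2 H2]].
  exists (Rmin d1 d2). split; [apply Rmin_pos; lra|].
  intros l Hl Hlen.
  assert (A1 := H1 l Hl ltac:(pose proof (Rmin_l d1 d2); lra)).
  assert (A2 := H2 l Hl ltac:(pose proof (Rmin_r d1 d2); lra)).
  eapply Rle_lt_trans; [apply sum_var_lin|].
  assert (Rabs a * sum_var f l <= Rabs a * e) by (apply Rmult_le_compat_l; lra).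
  assert (Rabs b * sum_var g l <= Rabs b * e) by (apply Rmult_le_compat_l; lra).
  nra.
Qed.

Lemma sum_var_lip f l lo hi : disj_in lo hi l ->
  (forall p q, p <= q -> Rabs (f q - f p) <= q - p) -> sum_var f l <= sum_len l.
Proof. revert lo. induction l as [|[p q] l IH]; unfold sum_var, sum_len in *; simpl; intros lo H Hf; [lra|].
  destruct H as [H1 [H2 [H3 H4]]]. specialize (IH q H4 Hf). specialize (Hf p q H2). lra. Qed.

Lemma ac_lip T f : (forall p q, p <= q -> Rabs (f q - f p) <= q - p) -> abs_cont_on T f.
Proof. intros Hf eps Heps. exists eps. split; auto. intros l Hl Hlen.
  pose proof (sum_var_lip f l 0 T Hl Hf). lra. Qed.

Lemma ac_id T : abs_cont_on T (fun t => t).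
Proof. apply ac_lip. intros p q H. rewrite Rabs_right; lra. Qed.

Lemma ac_const T k : abs_cont_on T (fun _ => k).
Proof. apply ac_lip. intros p q H. replace (k - k) with 0 by ring. rewrite Rabs_R0; lra. Qed.

Lemma dpl_lin f g t d1 d2 a b : derivable_pt_lim f t d1 -> derivable_pt_lim g t d2 ->
  derivable_pt_lim (fun x => a * f x + b * g x) t (a * d1 + b * d2).
Proof.
  intros H1 H2.
  pose proof (derivable_pt_lim_plus _ _ t _ _ (derivable_pt_lim_scal f a t d1 H1) (derivable_pt_lim_scal g b t d2 H2)) as H.
  unfold plus_fct, mult_real_fct in H. exact H.
Qed.

Lemma dpl_affine f x B : (forall h, f (x + h) = f x + B * h) -> derivable_pt_lim f x B.
Proof.
  intros H eps Heps. exists (mkposreal 1 Rlt_0_1). intros h Hh _.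
  rewrite H. replace ((f x + B * h - f x) / h - B) with 0 by (field; auto).
  rewrite Rabs_R0; lra.
Qed.

Lemma dpl_loc_const f t delta : delta > 0 -> (forall h, Rabs h < delta -> f (t + h) = f t) ->
  derivable_pt_lim f t 0.
Proof.
  intros Hd H eps Heps. exists (mkposreal delta Hd). intros h Hh Hh2. simpl in Hh2.
  rewrite H; auto. replace ((f t - f t) / h - 0) with 0 by (field; auto).
  rewrite Rabs_R0; lra.
Qed.

Lemma deriv_zero_on f a b t d : (forall s, a <= s <= b -> f s = 0) -> a < b -> a <= t <= b ->
  derivable_pt_lim f t d -> d = 0.
Proof.
  intros Hz Hab Ht Hd. apply NNPP; intro Hne.
  assert (Hpos : Rabs d > 0) by (apply Rabs_pos_lt; auto).
  destruct (Hd (Rabs d) Hpos) as [del Hdel].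
  set (m := Rmin (del/2) ((b-a)/2)).
  assert (Hm : 0 < m /\ m < del /\ m <= (b - a)/2).
  { unfold m, Rmin. pose proof (cond_pos del). destruct (Rle_dec (del/2) ((b-a)/2)); lra. }
  destruct (Rle_dec t ((a+b)/2)).
  - specialize (Hdel m ltac:(lra) ltac:(rewrite Rabs_right; lra)).
    rewrite (Hz (t+m)), (Hz t) in Hdel by lra.
    replace ((0 - 0) / m - d) with (- d) in Hdel by (field; lra). rewrite Rabs_Ropp in Hdel. lra.
  - specialize (Hdel (-m) ltac:(lra) ltac:(rewrite Rabs_left; lra)).
    rewrite (Hz (t + - m)), (Hz t) in Hdel by lra.
    replace ((0 - 0) / - m - d) with (- d) in Hdel by (field; lra). rewrite Rabs_Ropp in Hdel. lra.
Qed.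

Lemma ML0 T f : abs_cont_on T f -> ae_on T (fun t => derivable_pt_lim f t 0) ->
  forall s t, 0 <= s <= T -> 0 <= t <= T -> f t = f s.
Proof.
  intros Hac Hae.
  assert (K : forall s t, 0 <= s -> s <= t -> t <= T -> f t = f s).
  { intros s t Hs Hst HtT.
    assert (A1 := ML T 0 f (Rle_refl 0) Hac
             (ae_mono _ _ _ Hae (fun t _ H => ex_intro _ 0 (conj H (Rle_refl 0)))) s t Hs Hst HtT).
    assert (A2 := ML T 0 (fun x => -1 * f x + 0 * x) (Rle_refl 0) (ac_lin T (-1) 0 f _ Hac (ac_id T))).
    assert (Hae2 : ae_on T (fun t => exists d, derivable_pt_lim (fun x => -1 * f x + 0 * x) t d /\ d <= 0)).
    { apply (ae_mono _ _ _ Hae). intros u _ H. exists (-1 * 0 + 0 * 1). split; [|lra].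
      apply dpl_lin; auto. apply derivable_pt_lim_id. }
    specialize (A2 Hae2 s t Hs Hst HtT). lra. }
  intros s t Hs Ht. destruct (Rle_dec s t).
  - apply K; lra.
  - symmetry. apply K; lra.
Qed.

Lemma ac_cont T f t : abs_cont_on T f -> 0 <= t <= T -> forall eps, eps > 0 ->
  exists delta, delta > 0 /\ forall s, 0 <= s <= T -> Rabs (s - t) < delta -> Rabs (f s - f t) < eps.
Proof.
  intros Hac Ht eps Heps. destruct (Hac eps Heps) as [d [Hd H]]. exists d. split; auto.
  intros s Hs Hst. destruct (Rle_dec s t).
  - assert (A := H [(s,t)]). unfold sum_var, sum_len in A. simpl in A.
    rewrite Rabs_left1 in Hst by lra. rewrite <- Rabs_Ropp. replace (- (f s - f t)) with (f t - f s) by ring.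
    specialize (A ltac:(repeat split; lra) ltac:(lra)). lra.
  - assert (A := H [(t,s)]). unfold sum_var, sum_len in A. simpl in A.
    rewrite Rabs_right in Hst by lra.
    specialize (A ltac:(repeat split; lra) ltac:(lra)). lra.
Qed.

Definition clamp (a b t : R) := Rmin (Rmax t a) b.

Lemma nonnull T (P : R -> Prop) a b : 0 <= a -> a < b -> b <= T -> ae_on T P ->
  exists t, a < t < b /\ P t.
Proof.
  intros Ha Hab HbT Hae. apply NNPP; intro Hn.
  assert (Hlip : forall p q, p <= q -> Rabs (clamp a b q - clamp a b p) <= q - p).
  { intros p q Hpq. unfold clamp, Rmin, Rmax. apply Rabs_le.
    repeat destruct Rle_dec; lra. }
  assert (Hae2 : ae_on T (fun t => exists d, derivable_pt_lim (clamp a b) t d /\ d <= 0)).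
  { apply (ae_mono _ _ _ (ae_and _ _ _ Hae (ae_and _ _ _ (ae_pt T (fun t => t <> a) a (fun t H => H))
                                           (ae_pt T (fun t => t <> b) b (fun t H => H))))).
    intros t Ht [HP [Hta Htb]]. exists 0. split; [|lra].
    assert (Hout : t < a \/ t > b).
    { destruct (Rlt_dec t a); [left; auto|]. destruct (Rgt_dec t b); [right; auto|].
      exfalso. apply Hn. exists t. split; auto. split; [|lra]. destruct (Rtotal_order a t) as [?|[?|?]]; [auto|congruence|lra]. }
    destruct Hout as [Hl|Hr].
    - apply (dpl_loc_const _ _ (a - t)); [lra|]. intros h Hh. apply Rabs_def2 in Hh.
      unfold clamp, Rmin, Rmax. repeat destruct Rle_dec; lra.
    - apply (dpl_loc_const _ _ (t - b)); [lra|]. intros h Hh. apply Rabs_def2 in Hh.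
      unfold clamp, Rmin, Rmax. repeat destruct Rle_dec; lra. }
  pose proof (ML T 0 (clamp a b) (Rle_refl 0) (ac_lip T _ Hlip) Hae2 a b Ha (Rlt_le _ _ Hab) HbT).
  assert (clamp a b b = b /\ clamp a b a = a) as [E1 E2] by (unfold clamp, Rmin, Rmax; repeat destruct Rle_dec; lra). lra.
Qed.

Lemma zero_from_ae T f : abs_cont_on T f -> 0 < T -> ae_on T (fun t => f t = 0) ->
  forall t, 0 <= t <= T -> f t = 0.
Proof.
  intros Hac HT Hae t Ht. apply NNPP; intro Hne.
  assert (Hpos : Rabs (f t) > 0) by (apply Rabs_pos_lt; auto).
  destruct (ac_cont T f t Hac Ht _ Hpos) as [d [Hd H]].
  set (a := Rmax 0 (t - d/2)). set (b := Rmin T (t + d/2)).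
  assert (Hab : 0 <= a /\ a < b /\ b <= T /\ t - d/2 <= a /\ b <= t + d/2).
  { unfold a, b, Rmin, Rmax. repeat destruct Rle_dec; lra. }
  destruct (nonnull T _ a b ltac:(lra) ltac:(lra) ltac:(lra) Hae) as [s [Hs Hfs]].
  specialize (H s ltac:(lra) ltac:(apply Rabs_def1; lra)). rewrite Hfs in H.
  replace (0 - f t) with (- f t) in H by ring. rewrite Rabs_Ropp in H. lra.
Qed.


Lemma pm1_ex T v : const_pm1 T v -> exists s, (s = 1 \/ s = -1) /\ ae_on T (fun t => v t = s).
Proof. intros [H|H]; [exists 1|exists (-1)]; split; auto. Qed.

Lemma Rabs_pm1 s : s = 1 \/ s = -1 -> Rabs s = 1.
Proof. intros [->| ->]. apply Rabs_R1. rewrite Rabs_left; lra. Qed.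

Lemma partB T g u i : admissible T g u -> (i = 1 \/ i = 2)%nat -> const_pm1 T (u i) ->
  exists l : R -> V3, extremal_pair T l g u /\
       (forall t, 0 <= t <= T -> phi (3 - i)%nat l g t = 0).
Proof.
  intros Had Hi Hc. destruct (pm1_ex _ _ Hc) as [s [Hs Hu]].
  assert (Hss : s * s = 1) by (destruct Hs; subst; ring).
  assert (Habs := Rabs_pm1 s Hs).
  pose proof Had as [HT [Hac [Hum Hd]]].
  exists (fun _ => if Nat.eqb i 1 then mkV3 s 0 0 else mkV3 0 s 0).
  split.
  - split; [exact Had|]. split; [|split; [|split]].
    + intros k _. exact (ac_const T _).
    + intros t _. destruct (Nat.eqb i 1); intro H; injection H; intros; subst; lra.
    + apply (ae_mono _ _ _ Hd). intros t _ Hdt k Hk. split.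
      * exists 0. split.
        -- apply dpl_affine. intros h. destruct (Nat.eqb i 1); destruct k as [|[|k]];
           unfold Hfun, dot, X, vadd, vscal, ek; simpl; ring.
        -- replace (-0) with 0 by ring. apply (dpl_loc_const _ _ 1); [lra|]. intros; reflexivity.
      * exists (Defs.comp k (field_of (fun i0 => u i0 t) (g t))). split; [|apply Hdt; auto].
        apply dpl_affine. intros h. destruct (Nat.eqb i 1); destruct k as [|[|k]];
           unfold Hfun, dot, X, vadd, vscal, ek, field_of, Defs.comp; simpl; ring.
    + exists 1. split; [lra|]. apply (ae_mono _ _ _ Hu). intros t _ Ht.
      unfold phi, dot, X. simpl.
      destruct Hi as [-> | ->]; simpl; rewrite Ht.
      * split; [ring_simplify; lra|].
        replace (s * 1 + 0 * 0 + 0 * (- vy (g t) / 2)) with s by ring.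
        replace (s * 0 + 0 * 1 + 0 * (vx (g t) / 2)) with 0 by ring. rewrite Rabs_R0. lra.
      * split; [ring_simplify; lra|].
        replace (0 * 1 + s * 0 + 0 * (- vy (g t) / 2)) with 0 by ring.
        replace (0 * 0 + s * 1 + 0 * (vx (g t) / 2)) with s by ring. rewrite Rabs_R0. lra.
  - intros t _. destruct Hi as [-> | ->]; unfold phi, dot, X; simpl; ring.
Qed.

Lemma comp_field i w p : (i = 1 \/ i = 2)%nat -> Defs.comp (i - 1) (field_of w p) = w i.
Proof. intros [-> | ->]; unfold Defs.comp, field_of, vadd, vscal, X; simpl; ring. Qed.

Lemma partC T g u i : admissible T g u -> (i = 1 \/ i = 2)%nat -> const_pm1 T (u i) ->
  time_minimizer T g.
Proof.
  intros Had Hi Hc T' g' u' Had' E0 ET.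
  destruct (pm1_ex _ _ Hc) as [s [Hs Hu]].
  assert (Hss : s * s = 1) by (destruct Hs; subst; ring).
  assert (Habs := Rabs_pm1 s Hs).
  destruct Had as [HT [Hac [Hum Hd]]].
  destruct Had' as [HT' [Hac' [Hum' Hd']]].
  assert (Hk : (i - 1 <= 2)%nat) by lia.
  assert (A1 := ML0 T (fun t => s * Defs.comp (i-1) (g t) + (-1) * t)
                 (ac_lin _ _ _ _ _ (Hac _ Hk) (ac_id T))).
  assert (Hae1 : ae_on T (fun t => derivable_pt_lim (fun t => s * Defs.comp (i-1) (g t) + (-1) * t) t 0)).
  { apply (ae_mono _ _ _ (ae_and _ _ _ Hd Hu)). intros t _ [Hdt Hut].
    replace 0 with (s * Defs.comp (i-1) (field_of (fun i0 => u i0 t) (g t)) + (-1) * 1).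
    - apply dpl_lin; [apply Hdt; auto|apply derivable_pt_lim_id].
    - rewrite comp_field by auto. rewrite Hut. lra. }
  specialize (A1 Hae1 0 T ltac:(lra) ltac:(lra)). simpl in A1.
  assert (Hae2 : ae_on T' (fun t => exists d, derivable_pt_lim (fun t => s * Defs.comp (i-1) (g' t) + 0 * t) t d /\ d <= 1)).
  { destruct (Hum' i Hi) as [_ Hb].
    apply (ae_mono _ _ _ (ae_and _ _ _ Hd' Hb)). intros t _ [Hdt Hbt].
    exists (s * Defs.comp (i-1) (field_of (fun i0 => u' i0 t) (g' t)) + 0 * 1). split.
    - apply dpl_lin; [apply Hdt; auto|apply derivable_pt_lim_id].
    - rewrite comp_field by auto.
      assert (s * u' i t <= Rabs (s * u' i t)) by apply Rle_abs.
      rewrite Rabs_mult, Habs in H. lra. }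
  assert (A2 := ML T' 1 _ ltac:(lra) (ac_lin _ _ _ _ _ (Hac' _ Hk) (ac_id T')) Hae2 0 T' ltac:(lra) ltac:(lra) ltac:(lra)).
  simpl in A2. rewrite E0, ET in A2. lra.
Qed.


Lemma coreA T (psiA psiB uA uB : R -> R) L kA kB l0 a b :
  0 <= a -> a < b -> b <= T ->
  abs_cont_on T psiA -> abs_cont_on T psiB ->
  ae_on T (fun t => derivable_pt_lim psiA t (kA * uB t) /\ derivable_pt_lim psiB t (kB * uA t)) ->
  (L = 0 -> kA = 0 /\ kB = 0) -> (L <> 0 -> kA <> 0 /\ kB <> 0) ->
  ae_on T (fun t => uA t * psiA t + uB t * psiB t = l0 /\ Rabs (psiA t) + Rabs (psiB t) = l0) ->
  (forall t, a < t < b -> psiA t = 0) ->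
  (L = 0 -> forall t, 0 <= t <= T -> ~ (psiA t = 0 /\ psiB t = 0)) ->
  (ae_on T (fun t => uA t = 0 /\ uB t = 0) -> False) ->
  (forall t, 0 <= t <= T -> psiA t = 0) /\
  (ae_on T (fun t => uB t = 1) \/ ae_on T (fun t => uB t = -1)).
Proof.
  intros Ha Hab HbT HacA HacB Hder HL0 HL1 Hmax HI Hnz Hnc.
  assert (HT : 0 < T) by lra.
  destruct (Req_dec L 0) as [EL|NL].
  - destruct (HL0 EL) as [EA EB]. subst kA kB.
    assert (CA := ML0 T psiA HacA (ae_mono _ _ _ Hder (fun t _ H => ltac:(destruct H as [H _]; rewrite Rmult_0_l in H; exact H)))).
    assert (CB := ML0 T psiB HacB (ae_mono _ _ _ Hder (fun t _ H => ltac:(destruct H as [_ H]; rewrite Rmult_0_l in H; exact H)))).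
    assert (ZA : forall t, 0 <= t <= T -> psiA t = 0).
    { intros t Ht. rewrite (CA ((a+b)/2) t) by lra. apply HI. lra. }
    split; auto.
    set (c := psiB 0).
    assert (Hc : c <> 0). { intro H. apply (Hnz EL 0 ltac:(lra)). split; auto. apply ZA; lra. }
    assert (Hu : ae_on T (fun t => uB t * c = Rabs c)).
    { apply (ae_mono _ _ _ Hmax). intros t Ht [E1 E2].
      rewrite (ZA t Ht), (CB 0 t) in E1, E2 by lra. fold c in E1, E2.
      rewrite Rabs_R0 in E2. lra. }
    destruct (Rlt_dec 0 c) as [Hp|Hp].
    + left. apply (ae_mono _ _ _ Hu). intros t _ E. rewrite Rabs_right in E by lra.
      apply (Rmult_eq_reg_r c); auto. lra.
    + right. apply (ae_mono _ _ _ Hu). intros t _ E. rewrite Rabs_left in E by lra.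
      apply (Rmult_eq_reg_r c); auto. lra.
  - destruct (HL1 NL) as [NA NB]. exfalso.
    destruct (nonnull T _ a b Ha Hab HbT (ae_and _ _ _ Hder Hmax)) as [t [Ht [[DA DB] [M1 M2]]]].
    assert (E1 : kA * uB t = 0).
    { apply (deriv_zero_on psiA ((a+t)/2) ((t+b)/2) t); auto; try lra.
      intros s Hs. apply HI. lra. }
    assert (EuB : uB t = 0) by (destruct (Rmult_integral _ _ E1); [contradiction|auto]).
    rewrite HI in M1 by lra. rewrite EuB in M1. assert (El0 : l0 = 0) by lra. subst l0.
    assert (ZA : forall t, 0 <= t <= T -> psiA t = 0).
    { apply (zero_from_ae T psiA HacA HT). apply (ae_mono _ _ _ Hmax). intros s _ [_ E].
      pose proof (Rabs_pos (psiA s)). pose proof (Rabs_pos (psiB s)).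
      destruct (Req_dec (psiA s) 0) as [Q|Q]; [exact Q|pose proof (Rabs_pos_lt _ Q); lra]. }
    assert (ZB : forall t, 0 <= t <= T -> psiB t = 0).
    { apply (zero_from_ae T psiB HacB HT). apply (ae_mono _ _ _ Hmax). intros s _ [_ E].
      pose proof (Rabs_pos (psiA s)). pose proof (Rabs_pos (psiB s)).
      destruct (Req_dec (psiB s) 0) as [Q|Q]; [exact Q|pose proof (Rabs_pos_lt _ Q); lra]. }
    apply Hnc. apply (ae_mono _ _ _ Hder). intros s Hs [D1 D2].
    assert (F1 : kA * uB s = 0) by (apply (deriv_zero_on psiA 0 T s); auto).
    assert (F2 : kB * uA s = 0) by (apply (deriv_zero_on psiB 0 T s); auto).
    split.
    + destruct (Rmult_integral _ _ F2); [contradiction|auto].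
    + destruct (Rmult_integral _ _ F1); [contradiction|auto].
Qed.


Lemma V3_eq v w : vx v = vx w -> vy v = vy w -> vz v = vz w -> v = w.
Proof. destruct v, w; simpl; intros; subst; reflexivity. Qed.

Lemma partA T l g u j a b :
     extremal_pair T l g u ->
     (exists t, 0 <= t <= T /\ g t <> g 0) ->
     (j = 1 \/ j = 2)%nat ->
     0 <= a -> a < b -> b <= T ->
     (forall t, a < t < b -> phi j l g t = 0) ->
     (forall t, 0 <= t <= T -> phi j l g t = 0) /\ const_pm1 T (u (3 - j)%nat).
Proof.
  intros Hex Hnc Hj Ha Hab HbT HI.
  destruct Hex as [Had [Hacl [Hnz [Hder [l0 [Hl0 Hmax]]]]]].
  pose proof Had as [HT [Hacg [Hum Hdg]]].
  assert (DL : ae_on T (fun t =>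
     derivable_pt_lim (fun s => vx (l s)) t (- (u 2%nat t * vz (l t) / 2)) /\
     derivable_pt_lim (fun s => vy (l s)) t (- (u 1%nat t * (- vz (l t) / 2))) /\
     derivable_pt_lim (fun s => vz (l s)) t (- 0))).
  { apply (ae_mono _ _ _ Hder). intros t _ H.
    destruct (H 0%nat ltac:(lia)) as [[d0 [E0 D0]] _].
    destruct (H 1%nat ltac:(lia)) as [[d1 [E1 D1]] _].
    destruct (H 2%nat ltac:(lia)) as [[d2 [E2 D2]] _].
    assert (d0 = u 2%nat t * vz (l t) / 2).
    { apply (uniqueness_limite _ 0 _ _ E0). apply dpl_affine. intros h.
      unfold Hfun, dot, X, vadd, vscal, ek; simpl; field. }
    assert (d1 = u 1%nat t * (- vz (l t) / 2)).
    { apply (uniqueness_limite _ 0 _ _ E1). apply dpl_affine. intros h.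
      unfold Hfun, dot, X, vadd, vscal, ek; simpl; field. }
    assert (d2 = 0).
    { apply (uniqueness_limite _ 0 _ _ E2). apply dpl_affine. intros h.
      unfold Hfun, dot, X, vadd, vscal, ek; simpl; field. }
    subst. split; [exact D0|split; [exact D1|exact D2]]. }
  assert (DG : ae_on T (fun t =>
     derivable_pt_lim (fun s => vx (g s)) t (u 1%nat t) /\
     derivable_pt_lim (fun s => vy (g s)) t (u 2%nat t))).
  { apply (ae_mono _ _ _ Hdg). intros t _ H. split.
    - replace (u 1%nat t) with (Defs.comp 0 (field_of (fun i => u i t) (g t)))
        by (unfold Defs.comp, field_of, vadd, vscal, X; simpl; field).
      exact (H 0%nat ltac:(lia)).
    - replace (u 2%nat t) with (Defs.comp 1 (field_of (fun i => u i t) (g t)))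
        by (unfold Defs.comp, field_of, vadd, vscal, X; simpl; field).
      exact (H 1%nat ltac:(lia)). }
  assert (CL := ML0 T (fun s => vz (l s)) (Hacl 2%nat ltac:(lia))
     (ae_mono _ _ _ DL (fun t _ H => ltac:(destruct H as [_ [_ H]]; rewrite Ropp_0 in H; exact H)))).
  set (L := vz (l 0)).
  assert (HL : forall t, 0 <= t <= T -> vz (l t) = L) by (intros t Ht; apply (CL 0 t); lra).
  set (p1 := fun t => 1 * vx (l t) + (- L / 2) * vy (g t)).
  set (p2 := fun t => 1 * vy (l t) + (L / 2) * vx (g t)).
  assert (Ac1 : abs_cont_on T p1) by (apply ac_lin; [apply (Hacl 0%nat)|apply (Hacg 1%nat)]; lia).
  assert (Ac2 : abs_cont_on T p2) by (apply ac_lin; [apply (Hacl 1%nat)|apply (Hacg 0%nat)]; lia).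
  assert (F1 : forall t, 0 <= t <= T -> phi 1 l g t = p1 t).
  { intros t Ht. unfold phi, dot, X, p1; simpl. rewrite HL by auto. field. }
  assert (F2 : forall t, 0 <= t <= T -> phi 2 l g t = p2 t).
  { intros t Ht. unfold phi, dot, X, p2; simpl. rewrite HL by auto. field. }
  assert (DP : ae_on T (fun t => derivable_pt_lim p1 t ((- L) * u 2%nat t) /\
                                 derivable_pt_lim p2 t (L * u 1%nat t))).
  { apply (ae_mono _ _ _ (ae_and _ _ _ DL DG)). intros t Ht [[D0 [D1 _]] [G0 G1]].
    rewrite HL in D0, D1 by auto. split.
    - replace ((- L) * u 2%nat t) with (1 * (- (u 2%nat t * L / 2)) + (- L / 2) * u 2%nat t) by field.
      apply dpl_lin; auto.
    - replace (L * u 1%nat t) with (1 * (- (u 1%nat t * (- L / 2))) + (L / 2) * u 1%nat t) by field.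
      apply dpl_lin; auto. }
  assert (Hmax' : ae_on T (fun t => u 1%nat t * p1 t + u 2%nat t * p2 t = l0 /\
                                    Rabs (p1 t) + Rabs (p2 t) = l0)).
  { apply (ae_mono _ _ _ Hmax). intros t Ht. rewrite F1, F2 by auto. auto. }
  assert (Hnz' : L = 0 -> forall t, 0 <= t <= T -> ~ (p1 t = 0 /\ p2 t = 0)).
  { intros EL t Ht [Z1 Z2]. apply (Hnz t Ht). unfold p1, p2 in *. rewrite EL in *.
    assert (vz (l t) = 0) by (rewrite HL; auto).
    apply V3_eq; simpl; lra. }
  assert (Hnc' : ae_on T (fun t => u 1%nat t = 0 /\ u 2%nat t = 0) -> False).
  { intros Hz. destruct Hnc as [t [Ht Hne]]. apply Hne.
    assert (K : forall k, (k <= 2)%nat -> Defs.comp k (g t) = Defs.comp k (g 0)).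
    { intros k Hk. apply (ML0 T (fun s => Defs.comp k (g s)) (Hacg k Hk)); try lra.
      apply (ae_mono _ _ _ (ae_and _ _ _ Hdg Hz)). intros s _ [D [Z1 Z2]].
      replace 0 with (Defs.comp k (field_of (fun i => u i s) (g s))).
      - apply D; auto.
      - unfold field_of, vadd, vscal. simpl. rewrite Z1, Z2.
        destruct k as [|[|k]]; simpl; field. }
    apply V3_eq; [apply (K 0%nat)|apply (K 1%nat)|apply (K 2%nat)]; lia. }
  destruct Hj as [-> | ->].
  - destruct (coreA T p1 p2 (u 1%nat) (u 2%nat) L (- L) L l0 a b Ha Hab HbT Ac1 Ac2 DP
      ltac:(intros E; rewrite E; split; field) ltac:(intros E; split; auto; intro E'; apply E; lra)
      Hmax' ltac:(intros t Ht; rewrite <- F1 by lra; auto) Hnz' Hnc') as [R1 R2].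
    split.
    + intros t Ht. rewrite F1 by auto. auto.
    + exact R2.
  - assert (DP2 : ae_on T (fun t => derivable_pt_lim p2 t (L * u 1%nat t) /\
                                 derivable_pt_lim p1 t ((- L) * u 2%nat t))).
    { apply (ae_mono _ _ _ DP). intros t _ [Q1 Q2]; split; auto. }
    assert (Hmax2 : ae_on T (fun t => u 2%nat t * p2 t + u 1%nat t * p1 t = l0 /\
                                    Rabs (p2 t) + Rabs (p1 t) = l0)).
    { apply (ae_mono _ _ _ Hmax'). intros t _ [Q1 Q2]; split; lra. }
    destruct (coreA T p2 p1 (u 2%nat) (u 1%nat) L L (- L) l0 a b Ha Hab HbT Ac2 Ac1
      DP2
      ltac:(intros E; rewrite E; split; field) ltac:(intros E; split; auto; intro E'; apply E; lra)
      Hmax2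
      ltac:(intros t Ht; rewrite <- F2 by lra; auto)
      ltac:(intros E t Ht [Z1 Z2]; apply (Hnz' E t Ht); auto)
      ltac:(intros Hz; apply Hnc'; apply (ae_mono _ _ _ Hz); intros t _ [Z1 Z2]; auto)) as [R1 R2].
    split.
    + intros t Ht. rewrite F2 by auto. auto.
    + exact R2.
Qed.

Theorem mainTheorem3 :
  (* (a) *)
  (forall (T : R) (l g : R -> V3) (u : nat -> R -> R) (j : nat) (a b : R),
     extremal_pair T l g u ->
     (exists t, 0 <= t <= T /\ g t <> g 0) ->
     (j = 1 \/ j = 2)%nat ->
     0 <= a -> a < b -> b <= T ->
     (forall t, a < t < b -> phi j l g t = 0) ->
     (forall t, 0 <= t <= T -> phi j l g t = 0) /\ const_pm1 T (u (3 - j)%nat))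
  /\
  (* (b) *)
  (forall (T : R) (g : R -> V3) (u : nat -> R -> R) (i : nat),
     admissible T g u ->
     (i = 1 \/ i = 2)%nat ->
     const_pm1 T (u i) ->
     exists l : R -> V3, extremal_pair T l g u /\
       (forall t, 0 <= t <= T -> phi (3 - i)%nat l g t = 0))
  /\
  (* (c) *)
  (forall (T : R) (g : R -> V3) (u : nat -> R -> R) (i : nat),
     admissible T g u ->
     (i = 1 \/ i = 2)%nat ->
     const_pm1 T (u i) ->
     time_minimizer T g).
Proof.
  split; [|split].
  - intros T l g u j a b H1 H2 H3 H4 H5 H6 H7. exact (partA T l g u j a b H1 H2 H3 H4 H5 H6 H7).
  - intros T g u i H1 H2 H3. exact (partB T g u i H1 H2 H3).
  - intros T g u i H1 H2 H3. exact (partC T g u i H1 H2 H3).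
Qed.
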